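(* Let $S$ be a monoid with a unique zero element in which every nonzero element is invertible, and let $A$ be a finitely generated right $S$-act. If $X$ and $Y$ are minimal generating sets for $A$, then $|X|=|Y|$.
   Context: A (right) $S$-act is a nonempty set $A$ with an action $(a,s)\mapsto as$, $a1=a$, $a(st)=(as)t$. A subset $X\subseteq A$ generates $A$ if $A=\bigcup_{x\in X}xS$; it is a minimal generating set if no proper subset of it generates $A$. $A$ is finitely generated if it has a finite generating set. A zero of the monoid $S$ is an element $z$ with $zs=sz=z$ for all $s\in S$. *)

(* Defs.v *)
From Stdlib Require Import List.

Record monoid := Monoid {
  mcar :> Type;
  mmul : mcar -> mcar -> mcar;
  mone : mcar;
  mmulA : forall a b c, mmul a (mmul b c) = mmul (mmul a b) c;
  mmul1l : forall a, mmul mone a = a;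
  mmul1r : forall a, mmul a mone = a
}.

Definition is_zero (S : monoid) (z : S) : Prop :=
  forall s : S, mmul S z s = z /\ mmul S s z = z.

Definition invertible (S : monoid) (s : S) : Prop :=
  exists t : S, mmul S s t = mone S /\ mmul S t s = mone S.

Record ract (S : monoid) := RAct {
  acar :> Type;
  act : acar -> S -> acar;
  acar_nonempty : inhabited acar;
  act1 : forall a, act a (mone S) = a;
  actA : forall a s t, act a (mmul S s t) = act (act a s) t
}.
Arguments act {S} _ _ _.

Definition generates (S : monoid) (A : ract S) (X : A -> Prop) : Prop :=
  forall a : A, exists x : A, exists s : S, X x /\ a = act A x s.

Definition minimal_generating (S : monoid) (A : ract S) (X : A -> Prop) : Prop :=
  generates S A X /\
  forall Y : A -> Prop,
    (forall y, Y y -> X y) -> (exists x, X x /\ ~ Y x) -> ~ generates S A Y.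

Definition finitely_generated (S : monoid) (A : ract S) : Prop :=
  exists l : list A, generates S A (fun x => In x l).

Definition same_card {T : Type} (X Y : T -> Prop) : Prop :=
  exists (f : {x | X x} -> {y | Y y}) (g : {y | Y y} -> {x | X x}),
    (forall x, g (f x) = x) /\ (forall y, f (g y) = y).

(* Main.v *)
Require Import Defs.
From Stdlib Require Import List.
From Stdlib Require Import Classical ClassicalEpsilon ProofIrrelevance.

Lemma key (S : monoid) (A : ract S) (X : A -> Prop)
  (hX : minimal_generating S A X) (x x' : A) (s : S) :
  X x -> X x' -> x = act A x' s -> x' = x.
Proof.
  intros Hx Hx' Hs. destruct (classic (x' = x)) as [E|N]; [exact E|].
  exfalso. destruct hX as [hg hm].
  apply (hm (fun y => X y /\ y <> x)).
  - intros y [Hy _]; exact Hy.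
  - exists x; split; [exact Hx|]. intros [_ H]; apply H; reflexivity.
  - intros a. destruct (hg a) as [x0 [s0 [H0 Ha]]].
    destruct (classic (x0 = x)) as [E0|N0].
    + exists x', (mmul S s s0). split; [split; assumption|].
      rewrite actA, <- Hs, <- E0. exact Ha.
    + exists x0, s0. split; [split; assumption|exact Ha].
Qed.

Lemma pick (S : monoid) (A : ract S) (X Y : A -> Prop)
  (hX : minimal_generating S A X) (hY : minimal_generating S A Y) :
  {x | X x} -> {y | Y y}.
Proof.
  intros [x Hx].
  destruct hY as [hg _].
  destruct (constructive_indefinite_description _ (hg x)) as [y Hy].
  exists y. destruct Hy as [s [H _]]. exact H.
Defined.

Lemma pick_spec (S : monoid) (A : ract S) (X Y : A -> Prop)
  (hX : minimal_generating S A X) (hY : minimal_generating S A Y) x :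
  exists s, proj1_sig x = act A (proj1_sig (pick S A X Y hX hY x)) s.
Proof.
  destruct x as [x Hx]. unfold pick. destruct hY as [hg hm].
  destruct (constructive_indefinite_description _ (hg x)) as [y Hy].
  simpl. destruct Hy as [s [H1 H2]]. exists s; exact H2.
Qed.

Theorem lemma3p3 (S : monoid)
  (hzero : exists! z : S, is_zero S z)
  (hinv : forall s : S, ~ is_zero S s -> invertible S s)
  (A : ract S) (hfg : finitely_generated S A)
  (X Y : A -> Prop)
  (hX : minimal_generating S A X) (hY : minimal_generating S A Y) :
  same_card X Y.
Proof.
  exists (pick S A X Y hX hY), (pick S A Y X hY hX).
  split.
  - intros x. apply eq_sig_hprop; [intros; apply proof_irrelevance|].
    destruct (pick_spec S A X Y hX hY x) as [s Hs].
    destruct (pick_spec S A Y X hY hX (pick S A X Y hX hY x)) as [t Ht].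
    apply (key S A X hX (proj1_sig x) _ (mmul S t s) (proj2_sig x)
      (proj2_sig (pick S A Y X hY hX (pick S A X Y hX hY x)))).
    rewrite actA, <- Ht. exact Hs.
  - intros x. apply eq_sig_hprop; [intros; apply proof_irrelevance|].
    destruct (pick_spec S A Y X hY hX x) as [s Hs].
    destruct (pick_spec S A X Y hX hY (pick S A Y X hY hX x)) as [t Ht].
    apply (key S A Y hY (proj1_sig x) _ (mmul S t s) (proj2_sig x)
      (proj2_sig (pick S A X Y hX hY (pick S A Y X hY hX x)))).
    rewrite actA, <- Ht. exact Hs.
Qed.
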